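(* Under the standing assumptions below, for every $x\in\mathcal X$, $s\in\mathcal S$ and $\gamma\in\mathbb R^I_+$, the dual value function satisfies $$D(\gamma,x,s)=\inf_{\lambda\in\mathbb R^I_+}\ \sup_{a\in\tilde{\mathcal A}(x,s)}\Big[r(x,a,s)+\sum_{i=1}^I\big(\gamma^ig^i(x,a,s)+\lambda^i(g^i(x,a,s)-\bar g^i)\big)+\beta\,\mathbb E_s D(\gamma+\lambda,x',s')\Big],$$ where $x'=\zeta(x,a,s)$ and $\mathbb E_s$ is expectation over $s'\sim\pi(\cdot|s)$.
   Context: Setup. Let $\mathcal S$ be a finite set and $(s_t)_{t\ge0}$ a Markov chain on $\mathcal S$ with transition probabilities $\pi(s'|s)>0$ for all $s,s'\in\mathcal S$; for a shock history $s^t=(s_0,\dots,s_t)\in\mathcal S^{t+1}$ write $\pi^t(s^t|s_0)$ for its probability given $s_0$, and $\mathbb E_{s_t}$ (equivalently $\mathbb E_{s^t}$) for expectation over future shocks conditional on the history $s^t$. Let $\mathcal A\subset\mathbb R^n$ be a finite set, $\mathcal X\subseteq\mathbb R^m$ a countable set, $\zeta:\mathcal X\times\mathcal A\times\mathcal S\to\mathcal X$, $p:\mathcal X\times\mathcal A\times\mathcal S\to\mathbb R$, $r,g^1,\dots,g^I:\mathcal X\times\mathcal A\times\mathcal S\to\mathbb R$ bounded functions, $\bar g^1,\dots,\bar g^I\in\mathbb R$ constants and $\beta\in(0,1)$. A plan is a family $a=(a(s^t))_{t\ge0,\,s^t\in\mathcal S^{t+1}}$ with $a(s^t)\in\mathcal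 A$; given $x_0\in\mathcal X$ it induces states $x(s^0)=x_0$, $x(s^{t+1})=\zeta(x(s^t),a(s^t),s_t)$. Let $\tilde{\mathcal A}(x,s)=\{a\in\mathcal A:p(x,a,s)\ge0\}$ and let $\tilde{\mathcal A}^\infty(x_0)$ be the set of plans with $a(s^t)\in\tilde{\mathcal A}(x(s^t),s_t)$ for all $t,s^t$. A plan is feasible for $(x_0,s_0)$ if it lies in $\tilde{\mathcal A}^\infty(x_0)$ and satisfies the forward-looking constraints $\mathbb E_{s_t}\sum_{n=0}^\infty\beta^ng^i(x(s^{t+n}),a(s^{t+n}),s_{t+n})\ge\bar g^i$ for all $t$, $s^t$, $i$. Standing assumption: for every $x_0\in\mathcal X$, $s_0\in\mathcal S$ a feasible plan exists. Pre-action histories: $\mathcal H^t=\mathcal S^{t+1}\times\mathcal A^t$ with elements $h^t=(s_0,a_0,\dots,s_{t-1},a_{t-1},s_t)$; along $s^t$ a plan generates the history $h^t=(s_0,a(s^0),\dots,s_{t-1},a(s^{t-1}),s_t)$. Dual value function. $\Lambda$ is the set of families $(\lambda^i(h^t))_{t\ge0,h^t\in\mathcal H^t,1\le i\le I}$ with $\lambda^i(h^t)\ge0$ and $\sum_t\sum_{h^t}\sum_i\beta^t\lambda^i(h^t)\pi^t(s^t|s_0)<\infty$ ($s^t$ the shock history in $h^t$). For $\gamma\in\mathbb R^I_+$ the Lagrangian is $L(a,\lambda;\gamma,x_0,s_0)=\mathbb E_{s_0}\sum_{t\ge0}\beta^t\Big[r(x(s^t),a(s^t),s_t)+\sum_i\gamma^ig^i(x(s^t),a(s^t),s_t)+\sum_i\lambda^i(h^t)\Big(\sum_{n\ge0}\beta^ng^i(x(s^{t+n}),a(s^{t+n}),s_{t+n})-\bar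 g^i\Big)\Big]$, with $h^t$ the history generated by the plan, and $D(\gamma,x_0,s_0)=\inf_{\lambda\in\Lambda}\sup_{a\in\tilde{\mathcal A}^\infty(x_0)}L(a,\lambda;\gamma,x_0,s_0)$. *)

(* Defs.v *)
From HB Require Import structures.
From mathcomp Require Import all_boot all_order all_algebra.
From mathcomp Require Import all_classical all_reals all_analysis.
Set Implicit Arguments. Unset Strict Implicit. Unset Printing Implicit Defensive.
Import Order.TTheory GRing.Theory Num.Theory.
Import numFieldNormedType.Exports.
Local Open Scope ring_scope.
Local Open Scope classical_set_scope.

Fixpoint allseq (T : finType) (n : nat) : seq (seq T) :=
  if n is n'.+1 then [seq x :: l | x <- enum T, l <- allseq T n'] else [:: [::]].

Definition rsum {R : realType} (u : nat -> R) : R := limn (series u).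

Section Model.
Context {R : realType} {S A : finType} {X : countType} (I : nat).
(* pi s s' = pi(s'|s); shock histories s^t = [:: s_0; ...; s_t] : seq S;
   plans a : seq S -> A (a st = a(s^t)); multipliers
   lam : seq S -> seq A -> 'I_I -> R, lam st ac i = lam^i(h^t) for the
   pre-action history h^t with shocks st = s^t and actions ac = (a_0..a_{t-1}). *)
Context (pi : S -> S -> R) (zeta : X -> A -> S -> X)
        (r : X -> A -> S -> R) (g : 'I_I -> X -> A -> S -> R)
        (gbar : 'I_I -> R) (beta : R).

Fixpoint pprob (s : S) (c : seq S) : R :=
  if c is s' :: c' then pi s s' * pprob s' c' else 1.

Definition histprob (st : seq S) : R :=
  if st is s0 :: c then pprob s0 c else 0.

(* state x(s^t) induced by plan a and x0 *)
Fixpoint state_aux (a : seq S -> A) (x : X) (pre rest : seq S) : X :=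
  match rest with
  | s :: ((_ :: _) as rest') =>
      state_aux a (zeta x (a (rcons pre s)) s) (rcons pre s) rest'
  | _ => x
  end.
Definition state (a : seq S -> A) (x0 : X) (st : seq S) : X :=
  state_aux a x0 [::] st.

Definition flow (f : X -> A -> S -> R) (a : seq S -> A) (x0 : X) (st : seq S) : R :=
  if st is s0 :: c then f (state a x0 st) (a st) (last s0 c) else 0.

Definition contval (f : X -> A -> S -> R) (a : seq S -> A) (x0 : X) (st : seq S) : R :=
  if st is s0 :: c0 then
    rsum (fun n => beta ^+ n *
      \sum_(c <- allseq S n) pprob (last s0 c0) c * flow f a x0 (st ++ c))
  else 0.

(* actions (a(s^0), ..., a(s^{t-1})) generated along s^t *)
Definition acts (a : seq S -> A) (st : seq S) : seq A :=
  [seq a (take k.+1 st) | k <- iota 0 (size st).-1].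

Definition admissible (p : X -> A -> S -> R) (x0 : X) (a : seq S -> A) : Prop :=
  forall s0 c, 0 <= flow p a x0 (s0 :: c).

Definition feasible (p : X -> A -> S -> R) (x0 : X) (s0 : S) (a : seq S -> A) : Prop :=
  admissible p x0 a /\
  forall (c : seq S) (i : 'I_I), gbar i <= contval (g i) a x0 (s0 :: c).

Definition Lambda (lam : seq S -> seq A -> 'I_I -> R) : Prop :=
  (forall st ac i, 0 <= lam st ac i) /\
  (\sum_(t <oo) (beta ^+ t *
      \sum_(st <- allseq S t.+1) \sum_(ac <- allseq A t) \sum_(i < I)
         lam st ac i * histprob st)%:E < +oo)%E.

Definition lagrangian (a : seq S -> A) (lam : seq S -> seq A -> 'I_I -> R)
    (gamma : 'I_I -> R) (x0 : X) (s0 : S) : R :=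
  rsum (fun t => beta ^+ t * \sum_(c <- allseq S t)
    histprob (s0 :: c) *
     (flow r a x0 (s0 :: c)
      + \sum_(i < I) gamma i * flow (g i) a x0 (s0 :: c)
      + \sum_(i < I) lam (s0 :: c) (acts a (s0 :: c)) i *
          (contval (g i) a x0 (s0 :: c) - gbar i))).

Definition Dval (p : X -> A -> S -> R) (gamma : 'I_I -> R) (x0 : X) (s0 : S) : \bar R :=
  ereal_inf [set ereal_sup [set (lagrangian a lam gamma x0 s0)%:E
                             | a in admissible p x0]
            | lam in Lambda].

End Model.

(* Main.v *)
Require Import Defs.
From HB Require Import structures.
From mathcomp Require Import all_boot all_order all_algebra.
From mathcomp Require Import all_classical all_reals all_analysis.
From mathcomp Require Import ring lra.
Import Order.TTheory GRing.Theory Num.Theory.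
Import numFieldNormedType.Exports.
Local Open Scope ring_scope.
Local Open Scope classical_set_scope.

Set Implicit Arguments. Unset Strict Implicit. Unset Printing Implicit Defensive.

Lemma big_allseqS (R : realType) (T : finType) n (F : seq T -> R) :
  \sum_(c <- allseq T n.+1) F c = \sum_(x : T) \sum_(c <- allseq T n) F (x :: c).
Proof. by rewrite /= big_allpairs_dep big_enum. Qed.

Lemma mem_allseq (T : finType) n c : (c \in allseq T n) = (size c == n).
Proof.
elim: n c => [|n IH] c.
  by case: c => [|x c]; rewrite /= ?in_cons ?in_nil //.
case: c => [|x c].
  by apply/allpairsP; case=> -[y l] /= [_ _].
apply/allpairsP/idP.
    by case=> -[y l] /= [_]; rewrite IH => /eqP <- [_ ->].
  by move=> Hs; exists (x, c) => /=; split; rewrite ?mem_enum ?IH.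
Qed.

Section Comb.
Context {R : realType} {S : finType} (pi : S -> S -> R).
Context (pi_pos : forall s s', 0 < pi s s') (pi_sum : forall s, \sum_(s' : S) pi s s' = 1).

Lemma pprob_ge0 s c : 0 <= pprob pi s c.
Proof. elim: c s => [|x c IH] s //=; rewrite mulr_ge0 // ltW //. Qed.

Lemma sum_pprob n s : \sum_(c <- allseq S n) pprob pi s c = 1.
Proof.
elim: n s => [|n IH] s; first by rewrite /= big_seq1.
rewrite big_allseqS -(pi_sum s); apply: eq_bigr => x _ /=.
by rewrite -mulr_sumr IH mulr1.
Qed.

Lemma pprob_bound n s (h : seq S -> R) M :
  (forall c, `|h c| <= M) -> `|\sum_(c <- allseq S n) pprob pi s c * h c| <= M.
Proof.
move=> hM; apply: (le_trans (ler_norm_sum _ _ _)).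
apply: (@le_trans _ _ (\sum_(c <- allseq S n) pprob pi s c * M)).
  by apply: ler_sum => c _; rewrite normrM ger0_norm ?pprob_ge0 // ler_wpM2l ?pprob_ge0.
by rewrite -mulr_suml sum_pprob mul1r.
Qed.
End Comb.

Unset Implicit Arguments.
Section RS.
Context {R : realType}.
Implicit Types u v : nat -> R.
Lemma dom_cvg u v : (forall n, `|u n| <= v n) -> cvgn (series v) -> cvgn (series u).
Proof.
move=> uv cv; apply: normed_cvg.
apply: (@series_le_cvg _ (fun n => `|u n|) v) => // n.
exact: le_trans (uv n).
Qed.

Lemma dom_bound u v : (forall n, `|u n| <= v n) -> cvgn (series v) ->
  `|limn (series u)| <= limn (series v).
Proof.
move=> uv cv.
have cn : cvgn [normed series u].
  by apply: (@series_le_cvg _ (fun n => `|u n|) v) => // n; exact: le_trans (uv n).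
apply: (le_trans (lim_series_norm cn)).
by apply: lim_series_le => //.
Qed.

Lemma rsum_le u v : cvgn (series u) -> cvgn (series v) -> (forall n, u n <= v n) ->
  rsum u <= rsum v.
Proof. exact: lim_series_le. Qed.

Lemma seriesS_shift u n : series u n.+1 = u 0%N + series (fun k => u k.+1) n.
Proof. by rewrite /series /= big_nat_recl. Qed.

Lemma cvg_shift u : cvgn (series u) -> cvgn (series (fun k => u k.+1)) /\
   limn (series u) = u 0%N + limn (series (fun k => u k.+1)).
Proof.
move=> /cvg_ex [l Hl].
have Hs : series u \o S @ \oo --> l.
  by move: Hl; rewrite -cvg_shiftS.
have E : series (fun k => u k.+1) = (fun n => series u n.+1 - u 0%N).
  by apply/funext => n; rewrite seriesS_shift addrC addKr.
have H2 : series (fun k => u k.+1) @ \oo --> l - u 0%N.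
  by rewrite E; apply: cvgB => //; exact: cvg_cst.
split; first by apply/cvg_ex; exists (l - u 0%N).
by rewrite (cvg_lim _ Hl) // (cvg_lim _ H2) // addrC subrK.
Qed.

Lemma cvg_unshift u : cvgn (series (fun k => u k.+1)) -> cvgn (series u).
Proof.
move=> /cvg_ex [l Hl].
have H2 : series u \o S @ \oo --> u 0%N + l.
  have -> : series u \o S = (fun n => u 0%N + series (fun k => u k.+1) n).
    by apply/funext => n /=; rewrite seriesS_shift.
  by apply: cvgD => //; exact: cvg_cst.
by apply/cvg_ex; exists (u 0%N + l); rewrite -cvg_shiftS; exact: H2.
Qed.
End RS.
Section RS2.
Context {R : realType}.
Implicit Types u v : nat -> R.
Lemma rsumZ k u : cvgn (series u) -> cvgn (series (fun n => k * u n)) /\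
  limn (series (fun n => k * u n)) = k * limn (series u).
Proof.
move=> cu; have -> : (fun n => k * u n) = k *: u by apply/funext.
by split; [exact: is_cvg_seriesZ | rewrite lim_seriesZ].
Qed.

Lemma rsum_big (I : Type) (r : seq I) (F : I -> nat -> R) :
  (forall i, cvgn (series (F i))) ->
  cvgn (series (fun n => \sum_(i <- r) F i n)) /\
  limn (series (fun n => \sum_(i <- r) F i n)) = \sum_(i <- r) limn (series (F i)).
Proof.
move=> cF; elim: r => [|i r [IH1 IH2]].
  have -> : (fun n => \sum_(i <- [::]) F i n) = (fun _ => 0 : R).
    by apply/funext => n; rewrite big_nil.
  have -> : series (fun _ => 0 : R) = (fun _ => 0).
    by apply/funext => n; rewrite /series /= big1.
  by rewrite big_nil; split; [exact: is_cvg_cst | rewrite lim_cst].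
have -> : (fun n => \sum_(j <- i :: r) F j n) = F i + (fun n => \sum_(j <- r) F j n).
  by apply/funext => n; rewrite big_cons.
split; first exact: is_cvg_seriesD.
by rewrite lim_seriesD // IH2 big_cons.
Qed.

Lemma geo_cvg (b M : R) : 0 <= b < 1 -> cvgn (series (fun n => b ^+ n * M)) /\
   limn (series (fun n => b ^+ n * M)) = M / (1 - b).
Proof.
move=> /andP [b0 b1].
have -> : (fun n => b ^+ n * M) = geometric M b by apply/funext => n /=; rewrite mulrC.
have nb : `|b| < 1 by rewrite ger0_norm.
split; first exact: is_cvg_geometric_series.
by rewrite (cvg_lim _ (@cvg_geometric_series _ M _ nb)).
Qed.

Lemma ecvg u : (forall n, 0 <= u n) ->
  (cvgn (series u) <-> (\sum_(k <oo) (u k)%:E < +oo)%E).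
Proof.
move=> u0; split; last exact: nnseries_is_cvg.
move=> cu.
have -> : (\sum_(k <oo) (u k)%:E)%E = (limn (series u))%:E.
  rewrite -EFin_lim //; congr (limn _); apply/funext => n /=.
  by rewrite sumEFin.
exact: ltry.
Qed.
End RS2.
Arguments cvg_shift {R u}. Arguments cvg_unshift {R u}. Arguments rsumZ {R} k {u}.
Arguments rsum_big {R I} r {F}. Arguments dom_cvg {R u} v. Arguments dom_bound {R u} v.

Set Implicit Arguments.

Definition tl {S A : Type} (s : S) (a : seq S -> A) := fun d => a (s :: d).

Section Plans.
Context {R : realType} {S A : finType} {X : countType}.
Context (pi : S -> S -> R) (zeta : X -> A -> S -> X) (beta : R).

Lemma state_aux_tl (a : seq S -> A) s rest : forall x pre,
  state_aux zeta a x (s :: pre) rest = state_aux zeta (tl s a) x pre rest.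
Proof.
elim: rest => [|y rest IH] x pre //=.
by case: rest IH => [|z rest] IH.
Qed.

Lemma state_cons2 a x s s' c :
  state zeta a x (s :: s' :: c) = state zeta (tl s a) (zeta x (a [:: s]) s) (s' :: c).
Proof. by rewrite /state /= state_aux_tl. Qed.

Lemma flow_cons2 (f : X -> A -> S -> R) a x s s' c :
  flow zeta f a x (s :: s' :: c) = flow zeta f (tl s a) (zeta x (a [:: s]) s) (s' :: c).
Proof. by rewrite /flow state_cons2. Qed.

Lemma flow_1 (f : X -> A -> S -> R) a x s : flow zeta f a x [:: s] = f x (a [:: s]) s.
Proof. by []. Qed.

Lemma contval_cons2 (f : X -> A -> S -> R) a x s s' c :
  contval pi zeta beta f a x (s :: s' :: c) =
  contval pi zeta beta f (tl s a) (zeta x (a [:: s]) s) (s' :: c).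
Proof.
rewrite /contval; congr rsum; apply/funext => n; congr (_ * _).
by apply: eq_bigr => c2 _; rewrite !cat_cons flow_cons2.
Qed.

Lemma acts_cons2 (a : seq S -> A) s s' c :
  acts a (s :: s' :: c) = a [:: s] :: acts (tl s a) (s' :: c).
Proof.
by rewrite /acts /= -add1n iotaDl -map_comp.
Qed.

Section Loc.
Variables (a b : seq S -> A) (s : S).
Hypothesis Htl : tl s a = tl s b.

Lemma state_loc x c : state zeta a x (s :: c) = state zeta b x (s :: c).
Proof.
case: c => [|s' c] //; rewrite !state_cons2 Htl.
by have -> : a [:: s] = b [:: s] by exact: (congr1 (fun h => h [::]) Htl).
Qed.

Lemma flow_loc (f : X -> A -> S -> R) x c : flow zeta f a x (s :: c) = flow zeta f b x (s :: c).
Proof.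
rewrite /flow state_loc.
by have -> : a (s :: c) = b (s :: c) by exact: (congr1 (fun h => h c) Htl).
Qed.

Lemma acts_loc c : acts a (s :: c) = acts b (s :: c).
Proof.
rewrite /acts; apply: eq_map => k /=.
exact: (congr1 (fun h => h (take k c)) Htl).
Qed.

Lemma contval_loc (f : X -> A -> S -> R) x c :
  contval pi zeta beta f a x (s :: c) = contval pi zeta beta f b x (s :: c).
Proof.
rewrite /contval; congr rsum; apply/funext => n; congr (_ * _).
by apply: eq_bigr => c2 _; rewrite !cat_cons flow_loc.
Qed.
End Loc.
End Plans.

Lemma term_le_sum {R : realType} (T : eqType) (rr : seq T) (F : T -> R) x :
  x \in rr -> (forall y, 0 <= F y) -> F x <= \sum_(y <- rr) F y.
Proof.
elim: rr => [|y rr IH] //; rewrite in_cons big_cons => /orP [/eqP -> | xr] F0.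
  by rewrite lerDl sumr_ge0.
by apply: (le_trans (IH xr F0)); rewrite lerDr.
Qed.

Lemma size_acts {S A : finType} (a : seq S -> A) st : size (acts a st) = (size st).-1.
Proof. by rewrite /acts size_map size_iota. Qed.

Definition lsh {S A : Type} {T : Type} (s : S) (a0 : A) (lam : seq S -> seq A -> T) :=
  fun st ac => lam (s :: st) (a0 :: ac).

Section Main.
Context {R : realType} {S A : finType} {X : countType} (I : nat).
Context (pi : S -> S -> R) (zeta : X -> A -> S -> X)
  (r : X -> A -> S -> R) (g : 'I_I -> X -> A -> S -> R)
  (gbar : 'I_I -> R) (beta : R).
Context (pi_pos : forall s s', 0 < pi s s')
  (pi_sum : forall s, \sum_(s' : S) pi s s' = 1)
  (b0 : 0 < beta) (b1 : beta < 1).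
Context (Mr : R) (HMr : forall x a s, `|r x a s| <= Mr)
  (Mg : 'I_I -> R) (HMg : forall i x a s, `|g i x a s| <= Mg i)
  (Mg0 : forall i, 0 <= Mg i) (Mr0 : 0 <= Mr).

Lemma geoB (M : R) : cvgn (series (fun n => beta ^+ n * M)) /\
   limn (series (fun n => beta ^+ n * M)) = M / (1 - beta).
Proof. by apply: geo_cvg; rewrite (ltW b0) b1. Qed.

Definition cterm (f : X -> A -> S -> R) a x s0 c0 n :=
  beta ^+ n * \sum_(c <- allseq S n) pprob pi (last s0 c0) c * flow zeta f a x (s0 :: c0 ++ c).

Lemma contvalE f a x s0 c0 : contval pi zeta beta f a x (s0 :: c0) = rsum (cterm f a x s0 c0).
Proof. by []. Qed.

Lemma cterm_bound f (M : R) a x s0 c0 n : (forall x a s, `|f x a s| <= M) ->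
  `|cterm f a x s0 c0 n| <= beta ^+ n * M.
Proof.
move=> fM; rewrite /cterm normrM (ger0_norm (exprn_ge0 _ (ltW b0))).
apply: (ler_wpM2l (exprn_ge0 _ (ltW b0))).
apply: pprob_bound => // c.
by rewrite /flow; case: (s0 :: c0 ++ c).
Qed.

Lemma cterm_cvg f (M : R) a x s0 c0 : (forall x a s, `|f x a s| <= M) ->
  cvgn (series (cterm f a x s0 c0)).
Proof.
move=> fM; apply: (dom_cvg (fun n => beta ^+ n * M)) => [n|].
  exact: cterm_bound.
by case: (geoB M).
Qed.

Lemma contval_bound f (M : R) a x s0 c0 : (forall x a s, `|f x a s| <= M) ->
  `|contval pi zeta beta f a x (s0 :: c0)| <= M / (1 - beta).
Proof.
move=> fM; rewrite contvalE /rsum.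
have [cv lv] := geoB M.
rewrite -lv; apply: dom_bound => // n; exact: cterm_bound.
Qed.

Lemma contval_1 f (M : R) a x s : (forall x a s, `|f x a s| <= M) ->
  contval pi zeta beta f a x [:: s] = f x (a [:: s]) s +
   beta * \sum_(s' : S) pi s s' *
     contval pi zeta beta f (tl s a) (zeta x (a [:: s]) s) [:: s'].
Proof.
move=> fM; rewrite contvalE /rsum.
have [_ ->] := cvg_shift (@cterm_cvg f M a x s [::] fM).
congr (_ + _).
  by rewrite /cterm /= big_seq1 expr0 mul1r mul1r.
set x' := zeta x (a [:: s]) s.
have -> : (fun k => cterm f a x s [::] k.+1) =
   (fun k => beta * \sum_(s' <- index_enum S) (pi s s' * cterm f (tl s a) x' s' [::] k)).
  apply/funext => k; rewrite /cterm /= big_allseqS exprS -mulrA; congr (_ * _).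
  rewrite mulr_sumr; apply: eq_bigr => s' _.
  rewrite mulrCA; congr (_ * _); rewrite mulr_sumr.
  apply: eq_bigr => c _; rewrite state_cons2 -/x' /=; ring.
have cs : forall s', cvgn (series (fun k => pi s s' * cterm f (tl s a) x' s' [::] k)).
  by move=> s'; case: (rsumZ (pi s s') (@cterm_cvg f M (tl s a) x' s' [::] fM)).
have [c1 l1] := rsum_big (index_enum S) cs.
have [_ ->] := rsumZ beta c1; rewrite l1; congr (_ * _).
apply: eq_bigr => s' _.
by have [_ ->] := rsumZ (pi s s') (@cterm_cvg f M (tl s a) x' s' [::] fM).
Qed.
Notation cv := (contval pi zeta beta).
Notation fl := (flow zeta).

Definition lint (a : seq S -> A) (lam : seq S -> seq A -> 'I_I -> R) (gam : 'I_I -> R) x st :=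
  fl r a x st + \sum_(i < I) gam i * fl (g i) a x st
  + \sum_(i < I) lam st (acts a st) i * (cv (g i) a x st - gbar i).

Definition lterm a lam gam x s t :=
  beta ^+ t * \sum_(c <- allseq S t) histprob pi (s :: c) * lint a lam gam x (s :: c).

Lemma lagrE a lam gam x s :
  lagrangian pi zeta r g gbar beta a lam gam x s = rsum (lterm a lam gam x s).
Proof. by []. Qed.

Definition Lterm (lam : seq S -> seq A -> 'I_I -> R) t :=
  beta ^+ t * \sum_(st <- allseq S t.+1) \sum_(ac <- allseq A t) \sum_(i < I)
      lam st ac i * histprob pi st.

Definition nonneg (lam : seq S -> seq A -> 'I_I -> R) := forall st ac i, 0 <= lam st ac i.

Lemma histprob_ge0 st : 0 <= histprob pi st.
Proof. by case: st => [|s c] //=; exact: pprob_ge0. Qed.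

Lemma Lterm_ge0 lam : nonneg lam -> forall t, 0 <= Lterm lam t.
Proof.
move=> l0 t; rewrite mulr_ge0 ?exprn_ge0 ?(ltW b0) //.
by do 3 (apply: sumr_ge0 => ? _); rewrite mulr_ge0 ?histprob_ge0.
Qed.

Lemma LambdaE lam : Lambda pi beta lam <-> nonneg lam /\ cvgn (series (Lterm lam)).
Proof.
split=> -[l0 H]; split => //.
  by apply/(@ecvg _ (Lterm lam) (Lterm_ge0 l0)).
by apply/(@ecvg _ (Lterm lam) (Lterm_ge0 l0)).
Qed.

Definition Kc := \sum_(i < I) (Mg i / (1 - beta) + `|gbar i|).
Definition C0 (gam : 'I_I -> R) := Mr + \sum_(i < I) `|gam i| * Mg i.

Lemma cvg_bound_g i a x st : `|cv (g i) a x st| <= Mg i / (1 - beta).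
Proof.
case: st => [|s0 c0]; last by apply: contval_bound => //; exact: HMg.
by rewrite /= normr0 divr_ge0 // subr_ge0 ltW.
Qed.

Lemma lint_bound a lam gam x st : nonneg lam ->
  `|lint a lam gam x st| <= C0 gam + Kc * \sum_(i < I) lam st (acts a st) i.
Proof.
move=> l0; rewrite /lint /C0.
apply: (le_trans (ler_normD _ _)); apply: lerD.
  apply: (le_trans (ler_normD _ _)); apply: lerD.
    by rewrite /flow; case: st => [|s0 c0]; rewrite ?normr0 ?HMr.
  apply: (le_trans (ler_norm_sum _ _ _)); apply: ler_sum => i _.
  rewrite normrM; apply: ler_wpM2l => //.
  by rewrite /flow; case: st => [|s0 c0]; rewrite ?normr0 ?HMg.
apply: (le_trans (ler_norm_sum _ _ _)); rewrite mulr_sumr; apply: ler_sum => i _.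
rewrite normrM (ger0_norm (l0 _ _ _)) mulrC; apply: ler_wpM2r => //.
apply: (le_trans (ler_normB _ _)).
apply: (@le_trans _ _ (Mg i / (1 - beta) + `|gbar i|)).
  by rewrite lerD2r cvg_bound_g.
rewrite /Kc; apply: (term_le_sum (F := fun i => Mg i / (1 - beta) + `|gbar i|) (mem_index_enum i)).
by move=> y; rewrite addr_ge0 // divr_ge0 // subr_ge0 ltW.
Qed.

Lemma sum_acts_le lam a s t : nonneg lam ->
  \sum_(c <- allseq S t) histprob pi (s :: c) * \sum_(i < I) lam (s :: c) (acts a (s :: c)) i
  <= \sum_(st <- allseq S t.+1) \sum_(ac <- allseq A t) \sum_(i < I) lam st ac i * histprob pi st.
Proof.
move=> l0; rewrite big_allseqS.
apply: (le_trans _ (term_le_sum (F := fun x => \sum_(c <- allseq S t) \sum_(ac <- allseq A t)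
   \sum_(i < I) lam (x :: c) ac i * histprob pi (x :: c)) (mem_index_enum s) _)); last first.
  by move=> y; do 3 (apply: sumr_ge0 => ? _); rewrite mulr_ge0 ?histprob_ge0.
rewrite /= big_seq [X in _ <= X]big_seq; apply: ler_sum => c cin.
rewrite mulr_sumr.
have -> : \sum_(i < I) histprob pi (s :: c) * lam (s :: c) (acts a (s :: c)) i =
  (fun ac => \sum_(i < I) lam (s :: c) ac i * histprob pi (s :: c)) (acts a (s :: c)).
  by apply: eq_bigr => i _; rewrite mulrC.
apply: term_le_sum.
  by rewrite mem_allseq size_acts /=; rewrite mem_allseq in cin.
by move=> y; apply: sumr_ge0 => ? _; apply: mulr_ge0 => //; exact: (histprob_ge0 (s :: c)).
Qed.

Lemma lterm_bound a lam gam x s t : nonneg lam ->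
  `|lterm a lam gam x s t| <= beta ^+ t * C0 gam + Kc * Lterm lam t.
Proof.
move=> l0; rewrite /lterm /Lterm normrM (ger0_norm (exprn_ge0 _ (ltW b0))).
rewrite mulrCA -mulrDr; apply: (ler_wpM2l (exprn_ge0 _ (ltW b0))).
apply: (le_trans (ler_norm_sum _ _ _)).
apply: (@le_trans _ _ (\sum_(c <- allseq S t) histprob pi (s :: c) *
   (C0 gam + Kc * \sum_(i < I) lam (s :: c) (acts a (s :: c)) i))).
  apply: ler_sum => c _; rewrite normrM (ger0_norm (histprob_ge0 _)).
  by apply: ler_wpM2l; [exact: histprob_ge0 | exact: lint_bound].
under eq_bigr do rewrite mulrDr mulrCA.
rewrite big_split /= -mulr_suml -mulr_sumr.
have -> : \sum_(c <- allseq S t) histprob pi (s :: c) = 1 by exact: sum_pprob.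
rewrite mul1r lerD2l; apply: ler_wpM2l.
  by apply: sumr_ge0 => i _; rewrite addr_ge0 // divr_ge0 // subr_ge0 ltW.
exact: sum_acts_le.
Qed.


Lemma bnd_cvg gam lam : Lambda pi beta lam ->
  cvgn (series (fun t => beta ^+ t * C0 gam + Kc * Lterm lam t)) /\
  limn (series (fun t => beta ^+ t * C0 gam + Kc * Lterm lam t)) =
    C0 gam / (1 - beta) + Kc * limn (series (Lterm lam)).
Proof.
move=> /LambdaE [l0 cL].
have [cg lg] := geoB (C0 gam).
have [cK lK] := rsumZ Kc cL.
have -> : (fun t => beta ^+ t * C0 gam + Kc * Lterm lam t) =
   (fun t => beta ^+ t * C0 gam) + (fun t => Kc * Lterm lam t) by apply/funext.
split; first exact: is_cvg_seriesD.
by rewrite lim_seriesD // lg lK.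
Qed.

Lemma lagr_cvg a lam gam x s : Lambda pi beta lam -> cvgn (series (lterm a lam gam x s)).
Proof.
move=> HL; have [c _] := bnd_cvg gam HL.
apply: (dom_cvg _ _ c) => t; apply: lterm_bound; by case: HL.
Qed.

Lemma lagr_bound a lam gam x s : Lambda pi beta lam ->
  `|lagrangian pi zeta r g gbar beta a lam gam x s| <=
    C0 gam / (1 - beta) + Kc * limn (series (Lterm lam)).
Proof.
move=> HL; have [c l] := bnd_cvg gam HL.
rewrite lagrE /rsum -l; apply: (dom_bound _ _ c) => t; apply: lterm_bound; by case: HL.
Qed.

Lemma lint_lower a lam gam x st : nonneg lam ->
  (forall i, gbar i <= cv (g i) a x st) -> - C0 gam <= lint a lam gam x st.
Proof.
move=> l0 feas; rewrite /lint /C0 opprD -[X in X <= _]addr0; apply: lerD; last first.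
  apply: sumr_ge0 => i _; apply: mulr_ge0; first exact: l0.
  by rewrite subr_ge0.
apply: lerD.
  have : `|fl r a x st| <= Mr by rewrite /flow; case: st {feas} => [|s0 c0]; rewrite ?normr0 ?HMr.
  by rewrite ler_norml => /andP [].
have : `|\sum_(i < I) gam i * fl (g i) a x st| <= \sum_(i < I) `|gam i| * Mg i.
  apply: (le_trans (ler_norm_sum _ _ _)); apply: ler_sum => i _.
  rewrite normrM; apply: ler_wpM2l => //.
  by rewrite /flow; case: st {feas} => [|s0 c0]; rewrite ?normr0 ?HMg.
by rewrite ler_norml => /andP [].
Qed.

Lemma lagr_lower a lam gam x s : Lambda pi beta lam ->
  (forall c i, gbar i <= cv (g i) a x (s :: c)) ->
  - (C0 gam / (1 - beta)) <= lagrangian pi zeta r g gbar beta a lam gam x s.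
Proof.
move=> HL feas; have [cg lg] := geoB (- C0 gam).
rewrite lagrE -mulNr -lg; apply: rsum_le => //; first exact: lagr_cvg.
move=> t; rewrite /lterm; apply: (ler_wpM2l (exprn_ge0 _ (ltW b0))).
apply: (@le_trans _ _ (\sum_(c <- allseq S t) histprob pi (s :: c) * (- C0 gam))).
  rewrite -mulr_suml.
  have -> : \sum_(c <- allseq S t) histprob pi (s :: c) = 1 by exact: sum_pprob.
  by rewrite mul1r.
apply: ler_sum => c _; apply: ler_wpM2l; first exact: histprob_ge0.
apply: lint_lower => //; by case: HL.
Qed.
Lemma lint_cons2 a lam gam x s s' c :
  lint a lam gam x (s :: s' :: c) =
  lint (tl s a) (lsh s (a [:: s]) lam) gam (zeta x (a [:: s]) s) (s' :: c).
Proof.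
rewrite /lint flow_cons2 acts_cons2; congr (_ + _ + _).
  by apply: eq_bigr => i _; rewrite flow_cons2.
by apply: eq_bigr => i _; rewrite contval_cons2.
Qed.

Lemma lterm_S a lam gam x s t :
  lterm a lam gam x s t.+1 = beta * \sum_(s' <- index_enum S)
     (pi s s' * lterm (tl s a) (lsh s (a [:: s]) lam) gam (zeta x (a [:: s]) s) s' t).
Proof.
rewrite /lterm big_allseqS exprS -mulrA; congr (_ * _).
rewrite mulr_sumr; apply: eq_bigr => s' _.
rewrite mulrCA; congr (_ * _); rewrite mulr_sumr.
by apply: eq_bigr => c _; rewrite lint_cons2 /= mulrA.
Qed.

Lemma lint_gamma b mu gam l0 x st :
  lint b mu (fun i => gam i + l0 i) x st =
  lint b mu gam x st + \sum_(i < I) l0 i * fl (g i) b x st.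
Proof.
rewrite /lint.
under eq_bigr do rewrite mulrDl.
rewrite big_split /=; ring.
Qed.

Lemma lterm_gamma b mu gam l0 x s t :
  lterm b mu (fun i => gam i + l0 i) x s t =
  lterm b mu gam x s t + \sum_(i < I) l0 i * cterm (g i) b x s [::] t.
Proof.
rewrite /lterm /cterm.
under eq_bigr do rewrite lint_gamma mulrDr.
rewrite big_split /= mulrDr; congr (_ + _).
rewrite mulr_sumr.
under eq_bigr do rewrite !mulr_sumr.
rewrite exchange_big /=; apply: eq_bigr => i _.
rewrite !mulr_sumr; apply: eq_bigr => c _ /=; ring.
Qed.

Lemma lagr_gamma b mu gam l0 x s : Lambda pi beta mu ->
  lagrangian pi zeta r g gbar beta b mu (fun i => gam i + l0 i) x s =
  lagrangian pi zeta r g gbar beta b mu gam x s +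
  \sum_(i < I) l0 i * cv (g i) b x [:: s].
Proof.
move=> HL; rewrite !lagrE /rsum.
have cL := @lagr_cvg b mu gam x s HL.
have cc : forall i, cvgn (series (fun t => l0 i * cterm (g i) b x s [::] t)).
  move=> i; have := rsumZ (l0 i) (@cterm_cvg (g i) (Mg i) b x s [::] (HMg i)).
  by case.
have [c2 l2] := rsum_big (index_enum 'I_I) cc.
have -> : lterm b mu (fun i => gam i + l0 i) x s =
   lterm b mu gam x s + (fun t => \sum_(i < I) l0 i * cterm (g i) b x s [::] t).
  by apply/funext => t; rewrite lterm_gamma.
rewrite lim_seriesD // l2; congr (_ + _); apply: eq_bigr => i _.
have [_ ->] := rsumZ (l0 i) (@cterm_cvg (g i) (Mg i) b x s [::] (HMg i)).
by [].
Qed.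

Lemma sum_delta (T : finType) (y : T) (F : T -> R) :
  (forall z, z != y -> F z = 0) -> \sum_(z : T) F z = F y.
Proof. by move=> F0; rewrite (bigD1 y) //= big1 ?addr0. Qed.

Lemma Lterm_mono (nu1 nu2 : seq S -> seq A -> 'I_I -> R) t :
  (forall st ac i, nu1 st ac i <= nu2 st ac i) -> Lterm nu1 t <= Lterm nu2 t.
Proof.
move=> H; rewrite /Lterm; apply: (ler_wpM2l (exprn_ge0 _ (ltW b0))).
do 3 (apply: ler_sum => ? _); apply: ler_wpM2r; [exact: histprob_ge0 | exact: H].
Qed.

Lemma Lterm_sum (T : Type) (rr : seq T) (nu : T -> seq S -> seq A -> 'I_I -> R) t :
  Lterm (fun st ac i => \sum_(k <- rr) nu k st ac i) t = \sum_(k <- rr) Lterm (nu k) t.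
Proof.
elim: rr => [|k rr IH].
  rewrite big_nil /Lterm; apply/eqP; rewrite mulf_eq0; apply/orP; right; apply/eqP.
  by do 3 (apply: big1 => ? _); rewrite big_nil mul0r.
rewrite big_cons -IH /Lterm -mulrDr; congr (_ * _).
rewrite -big_split; apply: eq_bigr => st _; rewrite -big_split; apply: eq_bigr => ac _.
rewrite -big_split; apply: eq_bigr => i _ /=; by rewrite big_cons mulrDl.
Qed.

Definition pre (s : S) (y : A) (nu : seq S -> seq A -> 'I_I -> R) : seq S -> seq A -> 'I_I -> R :=
  fun st ac i => match st, ac with
  | s0 :: st', y0 :: ac' => if (s0 == s) && (y0 == y) then nu st' ac' i else 0
  | _, _ => 0 end.

Lemma Lterm_pre s y nu t : Lterm (pre s y nu) t.+1 =
  beta * (beta ^+ t * \sum_(st' <- allseq S t.+1) \sum_(ac' <- allseq A t) \sum_(i < I)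
     nu st' ac' i * histprob pi (s :: st')).
Proof.
rewrite /Lterm exprS -mulrA; congr (_ * _); congr (_ * _).
rewrite big_allseqS (@sum_delta _ s).
  apply: eq_bigr => st' _; rewrite big_allseqS (@sum_delta _ y).
    by apply: eq_bigr => ac' _; rewrite /pre !eqxx.
  move=> z zy; apply: big1 => ac' _; apply: big1 => i _.
  by rewrite /pre eqxx (negbTE zy) mul0r.
move=> z zs; apply: big1 => st' _; apply: big1 => ac _; apply: big1 => i _.
by case: ac => [|? ?]; rewrite /pre ?(negbTE zs) mul0r.
Qed.

Lemma pi_le1 s s' : pi s s' <= 1.
Proof.
rewrite -(pi_sum s); apply: (term_le_sum (F := pi s) (mem_index_enum s')).
by move=> y; exact: ltW.
Qed.

Lemma hp_cons_le s st : st != [::] -> histprob pi (s :: st) <= histprob pi st.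
Proof.
case: st => [|s' c] //= _.
rewrite -[X in _ <= X]mul1r; apply: ler_wpM2r; [exact: pprob_ge0 | exact: pi_le1].
Qed.

Definition pinv s := \sum_(s' : S) (pi s s')^-1.

Lemma pinv_gt0 s : 0 < pinv s.
Proof.
rewrite /pinv (bigD1 s) //= ltr_pwDl ?invr_gt0 //.
by apply: sumr_ge0 => ? _; rewrite invr_ge0 ltW.
Qed.

Lemma hp_cons_ge s st : st != [::] ->
  histprob pi st <= pinv s * histprob pi (s :: st).
Proof.
case: st => [|s' c] //= _.
rewrite mulrA -[X in X <= _]mul1r; apply: ler_wpM2r; first exact: pprob_ge0.
have pp := pi_pos s s'.
apply: (@le_trans _ _ ((pi s s')^-1 * pi s s')); first by rewrite mulVf ?lt0r_neq0.
apply: ler_wpM2r; first exact: ltW.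
apply: (term_le_sum (F := fun z => (pi s z)^-1) (mem_index_enum s')).
by move=> z; rewrite invr_ge0 ltW.
Qed.

Lemma Lambda_lsh s (y : A) (lam : seq S -> seq A -> 'I_I -> R) : Lambda pi beta lam -> Lambda pi beta (lsh s y lam).
Proof.
move=> /LambdaE [l0 cL]; apply/LambdaE; split.
  by move=> st ac i; exact: l0.
have [cS _] := cvg_shift cL.
have [cK _] := rsumZ (pinv s / beta) cS.
apply: (series_le_cvg _ _ _ cK).
- by move=> t; apply: Lterm_ge0 => st ac i; exact: l0.
- by move=> t; rewrite mulr_ge0 ?Lterm_ge0 // divr_ge0 ?ltW ?pinv_gt0.
move=> t.
have H1 : Lterm (pre s y (lsh s y lam)) t.+1 <= Lterm lam t.+1.
  apply: Lterm_mono => st ac i; case: st => [|s0 st']; case: ac => [|y0 ac'] //=; rewrite ?l0 //.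
  case: ifP => [/andP [/eqP -> /eqP ->] //|_]; exact: l0.
apply: (@le_trans _ _ (pinv s / beta * Lterm (pre s y (lsh s y lam)) t.+1)); last first.
  by apply: ler_wpM2l => //; rewrite divr_ge0 ?ltW ?pinv_gt0.
rewrite Lterm_pre -!mulrA mulKf ?lt0r_neq0 //.
rewrite /Lterm mulrCA; apply: (ler_wpM2l (exprn_ge0 _ (ltW b0))).
rewrite !mulr_sumr big_seq [X in _ <= X]big_seq; apply: ler_sum => st stin.
rewrite !mulr_sumr; apply: ler_sum => ac _; rewrite !mulr_sumr; apply: ler_sum => i _.
rewrite mulrCA; apply: ler_wpM2l; first exact: l0.
apply: hp_cons_ge; rewrite mem_allseq in stin; by case: st stin.
Qed.

Definition glue (s : S) (l0 : 'I_I -> R) (mu : A -> S -> seq S -> seq A -> 'I_I -> R)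
  : seq S -> seq A -> 'I_I -> R :=
  fun st ac i => match st, ac with
  | [:: s0], [::] => if s0 == s then l0 i else 0
  | s0 :: ((s' :: _) as st'), a0 :: ac' => if s0 == s then mu a0 s' st' ac' i else 0
  | _, _ => 0 end.

Definition base (s : S) (l0 : 'I_I -> R) : seq S -> seq A -> 'I_I -> R :=
  fun st ac i => if st == [:: s] then l0 i else 0.

Definition nusum (mu : A -> S -> seq S -> seq A -> 'I_I -> R) (y : A) :=
  fun st ac i => \sum_(s'' : S) mu y s'' st ac i.

Lemma Lterm_add nu1 nu2 t :
  Lterm (fun st ac i => nu1 st ac i + nu2 st ac i) t = Lterm nu1 t + Lterm nu2 t.
Proof.
rewrite /Lterm -mulrDr; congr (_ * _).
rewrite -big_split; apply: eq_bigr => st _; rewrite -big_split; apply: eq_bigr => ac _.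
by rewrite -big_split; apply: eq_bigr => i _ /=; rewrite mulrDl.
Qed.

Lemma Lterm_base s l0 t : Lterm (base s l0) t.+1 = 0.
Proof.
rewrite /Lterm big_seq big1 ?mulr0 // => st; rewrite mem_allseq => /eqP sz.
apply: big1 => ac _; apply: big1 => i _; rewrite /base.
by case: eqP => [E|_]; [rewrite E in sz | rewrite mul0r].
Qed.

Section GlueLemmas.
Variables (s : S) (l0 : 'I_I -> R) (mu : A -> S -> seq S -> seq A -> 'I_I -> R).
Hypothesis l00 : forall i, 0 <= l0 i.
Hypothesis muL : forall y s', Lambda pi beta (mu y s').

Lemma mu0 y s' : nonneg (mu y s').
Proof. by have /LambdaE [] := muL y s'. Qed.

Lemma nusum0 y : nonneg (nusum mu y).
Proof. by move=> st ac i; apply: sumr_ge0 => ? _; exact: mu0. Qed.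

Lemma pre0 y nu : nonneg nu -> nonneg (pre s y nu).
Proof.
move=> n0 st ac i; case: st => [|s0 st']; case: ac => [|y0 ac'] //=; case: ifP => // _; exact: n0.
Qed.

Definition Psum := fun st ac i => \sum_(y : A) pre s y (nusum mu y) st ac i.

Lemma Psum0 : nonneg Psum.
Proof. by move=> st ac i; apply: sumr_ge0 => y _; apply: pre0; exact: nusum0. Qed.

Lemma base0 : nonneg (base s l0).
Proof. by move=> st ac i; rewrite /base; case: ifP. Qed.

Lemma glue0 : nonneg (glue s l0 mu).
Proof.
move=> st ac i; rewrite /glue; case: st => [|s0 [|s' c]]; case: ac => [|a0 ac'] //;
  case: ifP => // _; exact: mu0.
Qed.

Lemma glue_le st ac i : glue s l0 mu st ac i <= base s l0 st ac i + Psum st ac i.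
Proof.
move: (base0 st ac i) (Psum0 st ac i).
rewrite /glue; case: st => [|s0 [|s' c]]; case: ac => [|a0 ac'] B0 P0 //; try by rewrite addr_ge0.
- by rewrite /base /= eqseq_cons andbT lerDl.
case: ifP => [/eqP E|_]; last by rewrite addr_ge0.
apply: ler_wpDl B0 _.
rewrite /Psum (bigD1 a0) //=; apply: ler_wpDr.
  by apply: sumr_ge0 => y _; case: ifP => // _; exact: nusum0.
rewrite E !eqxx /nusum (bigD1 s') //=; apply: ler_wpDr => //.
by apply: sumr_ge0 => y _; exact: mu0.
Qed.

Lemma Lambda_glue : Lambda pi beta (glue s l0 mu).
Proof.
apply/LambdaE; split; first exact: glue0.
have cB : cvgn (series (Lterm (base s l0))).
  apply: cvg_unshift; have -> : (fun t => Lterm (base s l0) t.+1) = (fun _ => 0).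
    by apply/funext => t; rewrite Lterm_base.
  have -> : series (fun _ => 0 : R) = (fun _ => 0).
    by apply/funext => n; rewrite /series /= big1.
  exact: is_cvg_cst.
have cmu : forall y s', cvgn (series (Lterm (mu y s'))).
  by move=> y s'; have /LambdaE [] := muL y s'.
have cF : forall y, cvgn (series (fun t => beta * \sum_(s'' <- index_enum S) Lterm (mu y s'') t)).
  move=> y; have [c1 _] := rsum_big (index_enum S) (cmu y).
  by have [] := rsumZ beta c1.
have [cV _] := rsum_big (index_enum A) cF.
have cP : cvgn (series (Lterm Psum)).
  apply: cvg_unshift; apply: (series_le_cvg _ _ _ cV).
  - by move=> t; apply: Lterm_ge0; exact: Psum0.
  - move=> t; apply: sumr_ge0 => y _; apply: mulr_ge0; first exact: ltW.
    by apply: sumr_ge0 => s'' _; apply: Lterm_ge0; exact: mu0.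
  move=> t; rewrite /Psum Lterm_sum; apply: ler_sum => y _.
  rewrite Lterm_pre; apply: ler_wpM2l; first exact: ltW.
  have -> : \sum_(s'' <- index_enum S) Lterm (mu y s'') t = Lterm (nusum mu y) t.
    by rewrite /nusum Lterm_sum.
  rewrite /Lterm; apply: (ler_wpM2l (exprn_ge0 _ (ltW b0))).
  rewrite big_seq [X in _ <= X]big_seq; apply: ler_sum => st stin.
  apply: ler_sum => ac _; apply: ler_sum => i _.
  apply: ler_wpM2l; first exact: nusum0.
  apply: hp_cons_le; rewrite mem_allseq in stin; by case: st stin.
have cBP : cvgn (series (fun t => Lterm (base s l0) t + Lterm Psum t)).
  have -> : (fun t => Lterm (base s l0) t + Lterm Psum t) =
     Lterm (base s l0) + Lterm Psum by apply/funext.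
  exact: is_cvg_seriesD.
apply: (series_le_cvg _ _ _ cBP).
- by apply: Lterm_ge0; exact: glue0.
- by move=> t; rewrite addr_ge0 // Lterm_ge0 //; [exact: base0 | exact: Psum0].
move=> t; rewrite -Lterm_add; apply: Lterm_mono; exact: glue_le.
Qed.
End GlueLemmas.

Lemma lagr_lam_loc a lam lam' gam x s :
  (forall c ac i, lam (s :: c) ac i = lam' (s :: c) ac i) ->
  lagrangian pi zeta r g gbar beta a lam gam x s =
  lagrangian pi zeta r g gbar beta a lam' gam x s.
Proof.
move=> E; rewrite !lagrE; congr rsum; apply/funext => t; rewrite /lterm.
congr (_ * _); apply: eq_bigr => c _; congr (_ * _); rewrite /lint; congr (_ + _).
by apply: eq_bigr => i _; rewrite E.
Qed.

Lemma lagr_plan_loc a b lam gam x s : tl s a = tl s b ->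
  lagrangian pi zeta r g gbar beta a lam gam x s =
  lagrangian pi zeta r g gbar beta b lam gam x s.
Proof.
move=> E; rewrite !lagrE; congr rsum; apply/funext => t; rewrite /lterm.
congr (_ * _); apply: eq_bigr => c _; congr (_ * _); rewrite /lint.
rewrite (flow_loc _ E) (acts_loc E); congr (_ + _ + _).
  by apply: eq_bigr => i _; rewrite (flow_loc _ E).
by apply: eq_bigr => i _; rewrite (contval_loc _ _ _ E).
Qed.

Lemma lagr_decomp a lam gam x s : Lambda pi beta lam ->
  lagrangian pi zeta r g gbar beta a lam gam x s =
  r x (a [:: s]) s + \sum_(i < I) (gam i * g i x (a [:: s]) s +
      lam [:: s] [::] i * (g i x (a [:: s]) s - gbar i)) +
  beta * \sum_(s' : S) pi s s' *
    lagrangian pi zeta r g gbar beta (tl s a) (lsh s (a [:: s]) lam)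
       (fun i => gam i + lam [:: s] [::] i) (zeta x (a [:: s]) s) s'.
Proof.
move=> HL; set a0 := a [:: s]; set x' := zeta x a0 s; set l0 := fun i => lam [:: s] [::] i.
have HL' := @Lambda_lsh s a0 lam HL.
rewrite lagrE /rsum; have [_ ->] := cvg_shift (@lagr_cvg a lam gam x s HL).
have -> : (fun t => lterm a lam gam x s t.+1) =
  (fun t => beta * \sum_(s' <- index_enum S) (pi s s' * lterm (tl s a) (lsh s a0 lam) gam x' s' t)).
  by apply/funext => t; rewrite lterm_S.
have cs : forall s', cvgn (series (fun t => pi s s' * lterm (tl s a) (lsh s a0 lam) gam x' s' t)).
  by move=> s'; case: (rsumZ (pi s s') (@lagr_cvg (tl s a) _ gam x' s' HL')).
have [c1 l1] := rsum_big (index_enum S) cs.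
have [_ ->] := rsumZ beta c1; rewrite l1.
have E2 : forall s', limn (series (fun t => pi s s' * lterm (tl s a) (lsh s a0 lam) gam x' s' t)) =
   pi s s' * (lagrangian pi zeta r g gbar beta (tl s a) (lsh s a0 lam) (fun i => gam i + l0 i) x' s'
      - \sum_(i < I) l0 i * contval pi zeta beta (g i) (tl s a) x' [:: s']).
  move=> s'; have [_ ->] := rsumZ (pi s s') (@lagr_cvg (tl s a) _ gam x' s' HL').
  by rewrite (@lagr_gamma (tl s a) (lsh s a0 lam) gam l0 x' s' HL') addrK.
under eq_bigr do rewrite E2.
have -> : lterm a lam gam x s 0 = lint a lam gam x [:: s].
  by rewrite /lterm /= big_seq1 expr0 !mul1r.
rewrite /lint flow_1.
have Hcv : forall i, contval pi zeta beta (g i) a x [:: s] = g i x a0 s +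
   beta * \sum_(s' : S) pi s s' * contval pi zeta beta (g i) (tl s a) x' [:: s'].
  by move=> i; apply: contval_1; exact: HMg.
set CV := fun i s' => contval pi zeta beta (g i) (tl s a) x' [:: s'].
have E0 : \sum_(i < I) gam i * flow zeta (g i) a x [:: s] = \sum_(i < I) gam i * g i x a0 s.
  by apply: eq_bigr => i _; rewrite flow_1.
have E1 : \sum_(i < I) lam [:: s] (acts a [:: s]) i * (contval pi zeta beta (g i) a x [:: s] - gbar i)
  = \sum_(i < I) l0 i * (g i x a0 s + beta * \sum_(s' : S) pi s s' * CV i s' - gbar i).
  by apply: eq_bigr => i _; rewrite Hcv.
rewrite E0 E1 -/l0 big_split /=.
set LL := fun s' => lagrangian pi zeta r g gbar beta (tl s a) (lsh s a0 lam) (fun i => gam i + l0 i) x' s'.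
have E3 : \sum_(i < I) l0 i * (g i x a0 s + beta * \sum_(s' : S) pi s s' * CV i s' - gbar i) =
   \sum_(i < I) l0 i * (g i x a0 s - gbar i) + beta * \sum_(s' : S) pi s s' * \sum_(i < I) l0 i * CV i s'.
  have E5 : beta * \sum_(s' : S) pi s s' * \sum_(i < I) l0 i * CV i s' =
      \sum_(i < I) l0 i * (beta * \sum_(s' : S) pi s s' * CV i s').
    rewrite mulr_sumr.
    transitivity (\sum_(s' : S) \sum_(i < I) beta * (pi s s' * (l0 i * CV i s'))).
      by apply: eq_bigr => s' _; rewrite !mulr_sumr.
    rewrite exchange_big /=; apply: eq_bigr => i _; rewrite !mulr_sumr.
    by apply: eq_bigr => s' _; ring.
  rewrite E5 -big_split /=; apply: eq_bigr => i _; ring.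
have E4 : \sum_(s' : S) pi s s' * (LL s' - \sum_(i < I) l0 i * CV i s') =
   \sum_(s' : S) pi s s' * LL s' - \sum_(s' : S) pi s s' * \sum_(i < I) l0 i * CV i s'.
  by rewrite -sumrB; apply: eq_bigr => s' _; rewrite mulrBr.
rewrite E3 E4; ring.
Qed.

Definition lam0 : seq S -> seq A -> 'I_I -> R := fun _ _ _ => 0.

Lemma Lambda0 : Lambda pi beta lam0.
Proof.
apply/LambdaE; split => // .
have -> : Lterm lam0 = (fun _ => 0).
  apply/funext => t; rewrite /Lterm.
  by rewrite big1 ?mulr0 // => st _; apply: big1 => ac _; apply: big1 => i _; rewrite mul0r.
have -> : series (fun _ => 0 : R) = (fun _ => 0).
  by apply/funext => n; rewrite /series /= big1.
exact: is_cvg_cst.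
Qed.

Lemma fin_bounds (e : \bar R) (lo hi : R) : (lo%:E <= e)%E -> (e <= hi%:E)%E -> e \is a fin_num.
Proof.
move=> H1 H2; rewrite fin_numElt; apply/andP; split.
  exact: (lt_le_trans (ltNyr lo) H1).
exact: (le_lt_trans H2 (ltry hi)).
Qed.

Section WithP.
Context (p : X -> A -> S -> R).
Context (feas : forall x0 s0, exists a, feasible pi zeta g gbar beta p x0 s0 a).

Lemma adm_tl a x s : admissible zeta p x a -> admissible zeta p (zeta x (a [:: s]) s) (tl s a).
Proof. by move=> H s' c; rewrite -flow_cons2; exact: H. Qed.

Lemma adm_0 a x s : admissible zeta p x a -> 0 <= p x (a [:: s]) s.
Proof. by move=> H; have := H s [::]; rewrite flow_1. Qed.

Definition Supv lam gam x s := ereal_sup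
  [set (lagrangian pi zeta r g gbar beta a lam gam x s)%:E | a in admissible zeta p x].

Lemma Sup_fin lam gam x s : Lambda pi beta lam -> Supv lam gam x s \is a fin_num.
Proof.
move=> HL; have [af [admf feasf]] := feas x s.
apply: (@fin_bounds _ (- (C0 gam / (1 - beta))) (C0 gam / (1 - beta) + Kc * limn (series (Lterm lam)))).
  apply: (le_trans _ (ereal_sup_ubound _)); last by exists af.
  by rewrite lee_fin; apply: lagr_lower => // c i; exact: feasf.
apply: ge_ereal_sup => _ [a _ <-]; rewrite lee_fin.
exact: (le_trans (ler_norm _) (lagr_bound _ _ _ _ HL)).
Qed.

Definition Dv gam x s := Dval pi zeta r g gbar beta p gam x s.

Lemma DvE gam x s : Dv gam x s = ereal_inf [set Supv lam gam x s | lam in Lambda pi beta].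
Proof. by []. Qed.

Lemma D_fin gam x s : Dv gam x s \is a fin_num.
Proof.
have [af [admf feasf]] := feas x s.
apply: (@fin_bounds _ (- (C0 gam / (1 - beta))) (fine (Supv lam0 gam x s))).
  rewrite DvE; apply: le_ereal_inf_tmp => _ [lam HL <-].
  apply: (le_trans _ (ereal_sup_ubound _)); last by exists af.
  by rewrite lee_fin; apply: lagr_lower => // c i; exact: feasf.
rewrite DvE fineK; last exact: Sup_fin Lambda0.
by apply: ereal_inf_lbound; exists lam0 => //; exact: Lambda0.
Qed.

Definition Df gam x s := fine (Dv gam x s).

Lemma DfE gam x s : Dv gam x s = (Df gam x s)%:E.
Proof. by rewrite /Df fineK // D_fin. Qed.


Definition Psi gam l0 x s a0 := r x a0 s + \sum_(i < I) (gam i * g i x a0 s + l0 i * (g i x a0 s - gbar i))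
  + beta * \sum_(s' : S) pi s s' * Df (fun i => gam i + l0 i) (zeta x a0 s) s'.

Lemma sum_pi_const s (c : R) : \sum_(s' : S) pi s s' * c = c.
Proof. by rewrite -mulr_suml pi_sum mul1r. Qed.

Lemma dirA gam x s lam a0 : Lambda pi beta lam -> 0 <= p x a0 s ->
  ((Psi gam (fun i => lam [:: s] [::] i) x s a0)%:E <= Supv lam gam x s)%E.
Proof.
move=> HL pa0; apply/lee_addgt0Pr => e e0.
set l0 := fun i => lam [:: s] [::] i; set x' := zeta x a0 s.
have HL' := @Lambda_lsh s a0 lam HL.
have Hch : forall s', exists a', admissible zeta p x' a' /\
    Df (fun i => gam i + l0 i) x' s' - e <
    lagrangian pi zeta r g gbar beta a' (lsh s a0 lam) (fun i => gam i + l0 i) x' s'.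
  move=> s'; have Sf := Sup_fin (fun i => gam i + l0 i) x' s' HL'.
  have [_ [a' ada' <-] Hy] := ub_ereal_sup_adherent e0 Sf.
  exists a'; split => //.
  have HD : (Dv (fun i => (gam i + l0 i)%R) x' s' <= Supv (lsh s a0 lam) (fun i => (gam i + l0 i)%R) x' s')%E.
    by rewrite DvE; apply: ereal_inf_lbound; exists (lsh s a0 lam).
  rewrite DfE -(fineK Sf) lee_fin in HD.
  change (is_true (Supv (lsh s a0 lam) (fun i => (gam i + l0 i)%R) x' s' - e%:E < (lagrangian pi zeta r g gbar beta a' (lsh s a0 lam) (fun i => (gam i + l0 i)%R) x' s')%:E)%E) in Hy.
  rewrite -(fineK Sf) -EFinB lte_fin in Hy.
  by apply: le_lt_trans Hy; rewrite lerD2r.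
have [A' HA'] := choice Hch.
have [af [admf _]] := feas x s.
pose ga := fun d : seq S => match d with
  | [::] => a0
  | s0 :: d' => if s0 == s then (match d' with [::] => a0 | s' :: _ => A' s' d' end) else af d end.
have ga_s : ga [:: s] = a0 by rewrite /ga eqxx.
have tl_ga : forall s', tl s' (tl s ga) = tl s' (A' s').
  by move=> s'; apply/funext => d; rewrite /tl /ga eqxx.
have adm_ga : admissible zeta p x ga.
  move=> s0 c; case: (eqVneq s0 s) => [-> | ne].
    case: c => [|s' c]; first by rewrite flow_1 ga_s.
    rewrite flow_cons2 ga_s -/x' (flow_loc _ (tl_ga s')).
    by have [H _] := HA' s'; exact: H.
  have E : tl s0 ga = tl s0 af by apply/funext => d; rewrite /tl /ga (negbTE ne).
  rewrite (flow_loc _ E); exact: admf.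
have Lga : lagrangian pi zeta r g gbar beta ga lam gam x s =
   r x a0 s + \sum_(i < I) (gam i * g i x a0 s + l0 i * (g i x a0 s - gbar i)) +
   beta * \sum_(s' : S) pi s s' *
     lagrangian pi zeta r g gbar beta (A' s') (lsh s a0 lam) (fun i => gam i + l0 i) x' s'.
  rewrite lagr_decomp // ga_s -/x' -/l0; congr (_ + _ * _).
  by apply: eq_bigr => s' _; rewrite (lagr_plan_loc _ _ _ (tl_ga s')).
have Hle : Psi gam l0 x s a0 <= lagrangian pi zeta r g gbar beta ga lam gam x s + beta * e.
  rewrite Lga /Psi -/x' -!addrA !lerD2l -mulrDr; apply: ler_wpM2l; first exact: ltW.
  rewrite -[X in _ <= _ + X](sum_pi_const s) -big_split /=; apply: ler_sum => s' _.
  rewrite -mulrDr; apply: ler_wpM2l; first exact: ltW.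
  have [_ H] := HA' s'; by rewrite -lerBlDr ltW.
apply: (le_trans (y := ((lagrangian pi zeta r g gbar beta ga lam gam x s)%:E + (beta * e)%:E)%E)).
  by rewrite -EFinD lee_fin.
apply: leeD.
  by apply: ereal_sup_ubound; exists ga.
rewrite lee_fin -[X in _ <= X]mul1r; apply: ler_wpM2r; [exact: ltW | exact: ltW].
Qed.

Lemma dirB gam x s l0 : (forall i, 0 <= l0 i) ->
  (Dv gam x s <= ereal_sup [set (Psi gam l0 x s a0)%:E | a0 in [set a0 | (0 <= p x a0 s)%R]])%E.
Proof.
move=> l00; apply/lee_addgt0Pr => e e0.
have Hch : forall ys : A * S, exists mu, Lambda pi beta mu /\
   (Supv mu (fun i => (gam i + l0 i)%R) (zeta x ys.1 s) ys.2 <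
    Dv (fun i => (gam i + l0 i)%R) (zeta x ys.1 s) ys.2 + e%:E)%E.
  move=> [y s'] /=.
  have [_ [mu HL <-] H] := lb_ereal_inf_adherent e0 (D_fin (fun i => (gam i + l0 i)%R) (zeta x y s) s').
  by exists mu.
have [M HM] := choice Hch.
pose mu := fun y s' => M (y, s').
have muL : forall y s', Lambda pi beta (mu y s') by move=> y s'; have [] := HM (y, s').
pose lam := glue s l0 mu.
have HL : Lambda pi beta lam by exact: Lambda_glue.
apply: (@le_trans _ _ (Supv lam gam x s)).
  by rewrite DvE; apply: ereal_inf_lbound; exists lam.
apply: ge_ereal_sup => _ [a ada <-].
set a0 := a [:: s]; set x' := zeta x a0 s.
have El0 : forall i, lam [:: s] [::] i = l0 i by move=> i; rewrite /lam /glue eqxx.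
have El : (fun i => gam i + lam [:: s] [::] i) = (fun i => gam i + l0 i).
  by apply/funext => i; rewrite El0.
have Eloc : forall s', lagrangian pi zeta r g gbar beta (tl s a) (lsh s a0 lam) (fun i => gam i + l0 i) x' s'
   = lagrangian pi zeta r g gbar beta (tl s a) (mu a0 s') (fun i => gam i + l0 i) x' s'.
  move=> s'; apply: lagr_lam_loc => c ac i.
  by rewrite /lsh /lam /glue eqxx.
have Lbd : forall s', lagrangian pi zeta r g gbar beta (tl s a) (mu a0 s') (fun i => gam i + l0 i) x' s'
   <= Df (fun i => gam i + l0 i) x' s' + e.
  move=> s'; have [_ H] := HM (a0, s'); rewrite /= -/x' DfE -EFinD in H.
  rewrite -lee_fin; apply: ltW; apply: le_lt_trans H.
  by apply: ereal_sup_ubound; exists (tl s a) => //; exact: adm_tl.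
have HLa : lagrangian pi zeta r g gbar beta a lam gam x s <= Psi gam l0 x s a0 + beta * e.
  rewrite lagr_decomp // -/a0 -/x' El /Psi -/x'.
  have -> : \sum_(i < I) (gam i * g i x a0 s + lam [:: s] [::] i * (g i x a0 s - gbar i)) =
     \sum_(i < I) (gam i * g i x a0 s + l0 i * (g i x a0 s - gbar i)).
    by apply: eq_bigr => i _; rewrite El0.
  rewrite -!addrA !lerD2l -mulrDr; apply: ler_wpM2l; first exact: ltW.
  rewrite -[X in _ <= _ + X](sum_pi_const s) -big_split /=; apply: ler_sum => s' _.
  rewrite -mulrDr Eloc; apply: ler_wpM2l; first exact: ltW.
  exact: Lbd.
apply: (@le_trans _ _ ((Psi gam l0 x s a0)%:E + (beta * e)%:E)%E).
  by rewrite -EFinD lee_fin.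
apply: leeD.
  by apply: ereal_sup_ubound; exists a0 => //; exact: adm_0.
rewrite lee_fin -[X in _ <= X]mul1r; apply: ler_wpM2r; [exact: ltW | exact: ltW].
Qed.

Lemma main_eq x s gam : Dv gam x s = ereal_inf [set ereal_sup
   [set (Psi gam lam x s a)%:E | a in [set a | (0 <= p x a s)%R]]
   | lam in [set lam : 'I_I -> R | forall i, (0 <= lam i)%R]].
Proof.
apply/eqP; rewrite eq_le; apply/andP; split.
  apply: le_ereal_inf_tmp => _ [l0 l00 <-]; exact: dirB.
rewrite DvE; apply: le_ereal_inf_tmp => _ [lam HL <-].
apply: (@le_trans _ _ (ereal_sup [set (Psi gam (fun i => lam [:: s] [::] i) x s a)%:E
   | a in [set a | (0 <= p x a s)%R]])).
  apply: ereal_inf_lbound; exists (fun i => lam [:: s] [::] i) => //.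
  by move=> i; have /LambdaE [l0 _] := HL; exact: l0.
apply: ge_ereal_sup => _ [a0 pa0 <-]; exact: dirA.
Qed.

Lemma exprE gam l0 x s a0 :
  ((r x a0 s + \sum_(i < I) (gam i * g i x a0 s + l0 i * (g i x a0 s - gbar i)))%:E
   + beta%:E * \sum_(s' : S) (pi s s')%:E *
       Dval pi zeta r g gbar beta p (fun i => (gam i + l0 i)%R) (zeta x a0 s) s')%E
  = (Psi gam l0 x s a0)%:E.
Proof.
have DvalE : forall gam x s, Dval pi zeta r g gbar beta p gam x s = (Df gam x s)%:E.
  by move=> *; exact: DfE.
have -> : (\sum_(s' : S) ((pi s s')%:E *
     Dval pi zeta r g gbar beta p (fun i => (gam i + l0 i)%R) (zeta x a0 s) s')%E) =
   (\sum_(s' : S) pi s s' * Df (fun i => (gam i + l0 i)%R) (zeta x a0 s) s')%:E.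
  by rewrite -sumEFin; apply: eq_bigr => s' _; rewrite EFinM DvalE.
by rewrite /Psi -EFinM -EFinD.
Qed.

Lemma main_final x s gam :
  Dval pi zeta r g gbar beta p gam x s =
  ereal_inf [set ereal_sup
     [set ((r x a s + \sum_(i < I) (gam i * g i x a s
                                    + lam i * (g i x a s - gbar i)))%:E
           + beta%:E * \sum_(s' : S) (pi s s')%:E *
               Dval pi zeta r g gbar beta p (fun i => (gam i + lam i)%R)
                    (zeta x a s) s')%E
     | a in [set a : A | (0 <= p x a s)%R]]
   | lam in [set lam : 'I_I -> R | forall i, (0 <= lam i)%R]].
Proof.
have -> : Dval pi zeta r g gbar beta p gam x s = Dv gam x s by [].
rewrite main_eq; congr ereal_inf; apply: eq_imagel => lam _.
by congr ereal_sup; apply: eq_imagel => a _; rewrite exprE.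
Qed.
End WithP.
End Main.


Theorem theorem3p1 (R : realType) (S A : finType) (X : countType) (I : nat)
  (pi : S -> S -> R) (zeta : X -> A -> S -> X)
  (p r : X -> A -> S -> R) (g : 'I_I -> X -> A -> S -> R)
  (gbar : 'I_I -> R) (beta : R)
  (pi_pos : forall s s', 0 < pi s s')
  (pi_sum : forall s, \sum_(s' : S) pi s s' = 1)
  (r_bdd : exists M : R, forall x a s, `|r x a s| <= M)
  (g_bdd : forall i, exists M : R, forall x a s, `|g i x a s| <= M)
  (beta01 : 0 < beta < 1)
  (feas : forall (x0 : X) (s0 : S),
      exists a : seq S -> A, feasible pi zeta g gbar beta p x0 s0 a) :
  forall (x : X) (s : S) (gamma : 'I_I -> R), (forall i, 0 <= gamma i) ->
  Dval pi zeta r g gbar beta p gamma x s =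
  ereal_inf [set ereal_sup
     [set ((r x a s + \sum_(i < I) (gamma i * g i x a s
                                    + lam i * (g i x a s - gbar i)))%:E
           + beta%:E * \sum_(s' : S) (pi s s')%:E *
               Dval pi zeta r g gbar beta p (fun i => (gamma i + lam i)%R)
                    (zeta x a s) s')%E
     | a in [set a : A | 0 <= p x a s]]
   | lam in [set lam : 'I_I -> R | forall i, 0 <= lam i]].
Proof.
move=> x s gamma _.
have [M HM] := r_bdd.
have [Mg HMg] := choice g_bdd.
have /andP [b0 b1] := beta01.
apply: (@main_final R S A X I pi zeta r g gbar beta pi_pos pi_sum b0 b1
          `|M| _ (fun i => `|Mg i|) _ _ _ p feas).
- by move=> x' a s'; apply: (le_trans (HM x' a s')); exact: ler_norm.
- by move=> i x' a s'; apply: (le_trans (HMg i x' a s')); exact: ler_norm.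
- by move=> i.
- by [].
Qed.
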